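(* Let $\boldsymbol{\psi}=(\psi_k)_{k\in\mathbb{K}}$ be a regularization of $\psi:\mathcal{M}\to\Theta$ which is continuous at the data-generating distribution $P\in\mathcal{M}$ with respect to a distance $d$, with moduli $(\delta_k)_{k\in\mathbb{K}}$, and let $(r_n)$ be a real-valued positive diverging sequence with $d(P_n,P)=o_P(r_n^{-1})$. Suppose $k\mapsto\|\psi_k(P)-\psi(P)\|_\Theta$ is continuous and non-increasing and, for each $n$, $k\mapsto\delta_k(r_n^{-1})$ is continuous and non-decreasing. For each $n$ let $\mathcal{G}_n$ be a finite subset of $\mathbb{K}$, let $$\mathcal{L}_n=\{k\in\mathcal{G}_n:\ \|\psi_k(P_n)-\psi_{k'}(P_n)\|_\Theta\le4\delta_{k'}(r_n^{-1})\ \forall k'\ge k,\ k'\in\mathcal{G}_n\}$$ and $\tilde k_n(r_n)=\min\mathcal{L}_n$. Then $$\|\psi_{\tilde k_n(r_n)}(P_n)-\psi(P)\|_\Theta=O_P\left(\inf_{k\in\mathcal{G}_n}\{\delta_k(r_n^{-1})+\|\psi_k(P)-\psi(P)\|_\Theta\}\right).$$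
   Context: Setting: $\mathbb{Z}\subseteq\mathbb{R}^d$; data IID with law $P$; $\mathbf{P}$ the product probability on $\mathbb{Z}^\infty$ (to which $o_P,O_P$ refer); $ca(\mathbb{Z})$ signed Borel measures of finite variation; $\mathcal{D}$ discretely supported probability measures; $P_n$ the empirical distribution. $\mathcal{M}$ a set of Borel probability measures, $(\Theta,\|\cdot\|_\Theta)$ a normed space, $\mathbb{K}\subseteq\mathbb{R}_+$ unbounded above. A regularization is a family $(\psi_k)_{k\in\mathbb{K}}$, $\psi_k:\mathbb{D}_\psi\subseteq ca(\mathbb{Z})\to\Theta$, $\mathbb{D}_\psi\supseteq\mathcal{M}\cup\mathcal{D}$, with $\|\psi_k(Q)-\psi(Q)\|_\Theta\to0$ for all $Q\in\mathcal{M}$. A modulus of continuity is a continuous non-decreasing $f:\mathbb{R}_+\to\mathbb{R}_+$ with $f(t)=0$ iff $t=0$; continuity at $P$ w.r.t. $d$ means moduli $(\delta_k)$ with $\|\psi_k(P')-\psi_k(P)\|_\Theta\le\delta_k(d(P',P))$ for all $k$ and $P'\in\mathbb{D}_\psi$. *)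

(* Defs.v *)
From mathcomp Require Import all_boot all_order all_algebra.
From mathcomp Require Import all_classical all_reals all_analysis.
Import Order.TTheory GRing.Theory Num.Theory numFieldTopology.Exports numFieldNormedType.Exports.

Set Implicit Arguments.
Unset Strict Implicit.
Unset Printing Implicit Defensive.

Local Open Scope classical_set_scope.
Local Open Scope ring_scope.

Section Defs.
Context {R : realType} {d : nat}.

(* Set functions on R^d (= 'M[R]_(1, d)); measures on Z are represented as
   set functions on subsets of R^d that vanish off the trace sigma-algebra of Z. *)
Definition Meas := set 'M[R]_(1, d) -> R.

Definition borel_Rd : set (set 'M[R]_(1, d)) :=
  <<s (open : set (set 'M[R]_(1, d))) >>.

Definition Zmeasurable (Z : set 'M[R]_(1, d)) (A : set 'M[R]_(1, d)) : Prop :=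
  exists B, borel_Rd B /\ A = B `&` Z.

Definition is_ca (Z : set 'M[R]_(1, d)) (mu : Meas) : Prop :=
  (forall A, ~ Zmeasurable Z A -> mu A = 0) /\
  (forall F : nat -> set 'M[R]_(1, d), (forall i, Zmeasurable Z (F i)) ->
     trivIset setT F ->
     series (fun i => mu (F i)) n @[n --> \oo] --> mu (\bigcup_i F i)) /\
  (exists C : R, forall F : nat -> set 'M[R]_(1, d),
     (forall i, Zmeasurable Z (F i)) -> trivIset setT F ->
     forall n, \sum_(i < n) `|mu (F i)| <= C).

Definition is_prob (Z : set 'M[R]_(1, d)) (mu : Meas) : Prop :=
  is_ca Z mu /\ (forall A, Zmeasurable Z A -> 0 <= mu A) /\ mu Z = 1.

Definition is_discrete_prob (Z : set 'M[R]_(1, d)) (mu : Meas) : Prop :=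
  is_prob Z mu /\ exists S, countable S /\ S `<=` Z /\ mu S = 1.

Definition empirical {T : Type} (Z : set 'M[R]_(1, d))
  (X : nat -> T -> 'M[R]_(1, d)) (n : nat) (w : T) : Meas :=
  fun A => if pselect (Zmeasurable Z A)
           then n%:R^-1 * \sum_(i < n) \1_A (X i w) else 0.

Definition iid_law {dO : measure_display} {Om : measurableType dO}
  (Pr : probability Om R) (Z : set 'M[R]_(1, d))
  (X : nat -> Om -> 'M[R]_(1, d)) (P : Meas) : Prop :=
  (forall i w, Z (X i w)) /\
  (forall i A, Zmeasurable Z A -> measurable (X i @^-1` A)) /\
  (forall i A, Zmeasurable Z A -> Pr (X i @^-1` A) = (P A)%:E) /\
  (forall (I : seq nat) (A : nat -> set 'M[R]_(1, d)), uniq I ->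
     (forall i, Zmeasurable Z (A i)) ->
     (Pr (\bigcap_(i in [set` I]) X i @^-1` A i)
      = \prod_(i <- I) Pr (X i @^-1` A i))%E).

(* E is contained in a measurable set of probability < eta
   (i.e. the outer probability of E is < eta) *)
Definition outer_lt {dO : measure_display} {Om : measurableType dO}
  (Pr : probability Om R) (E : set Om) (eta : R) : Prop :=
  exists B, measurable B /\ E `<=` B /\ (Pr B < eta%:E)%E.

Definition little_o_in_prob {dO : measure_display} {Om : measurableType dO}
  (Pr : probability Om R) (Y : nat -> Om -> R) (a : nat -> R) : Prop :=
  forall eps eta : R, 0 < eps -> 0 < eta ->
    \forall n \near \oo, outer_lt Pr [set w | eps * a n < `|Y n w|] eta.

Definition big_O_in_prob {dO : measure_display} {Om : measurableType dO}
  (Pr : probability Om R) (Y : nat -> Om -> R) (a : nat -> R) : Prop :=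
  forall eta : R, 0 < eta -> exists M : R,
    \forall n \near \oo, outer_lt Pr [set w | M * a n < `|Y n w|] eta.

Definition modulus (f : R -> R) : Prop :=
  {within [set t : R | 0 <= t], continuous f} /\
  (forall s t, 0 <= s -> s <= t -> f s <= f t) /\
  (forall t, 0 <= t -> 0 <= f t) /\
  (forall t, 0 <= t -> (f t = 0 <-> t = 0)).

Definition is_distance (Dpsi : set Meas) (dist : Meas -> Meas -> R) : Prop :=
  forall x y z, Dpsi x -> Dpsi y -> Dpsi z ->
    0 <= dist x y /\ (dist x y = 0 <-> x = y) /\ dist x y = dist y x /\
    dist x z <= dist x y + dist y z.

Definition regularization {Theta : normedModType R} (Z : set 'M[R]_(1, d))
  (K : set R) (M : set Meas) (psi : Meas -> Theta)
  (psik : R -> Meas -> Theta) (Dpsi : set Meas) : Prop :=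
  Dpsi `<=` is_ca Z /\ M `<=` Dpsi /\ is_discrete_prob Z `<=` Dpsi /\
  (forall Q, M Q -> forall e : R, 0 < e -> exists k0 : R,
     forall k, K k -> k0 <= k -> `|psik k Q - psi Q| < e).

Definition reg_continuous_at {Theta : normedModType R} (K : set R)
  (psik : R -> Meas -> Theta) (Dpsi : set Meas) (dist : Meas -> Meas -> R)
  (P : Meas) (delta : R -> R -> R) : Prop :=
  (forall k, K k -> modulus (delta k)) /\
  (forall k P', K k -> Dpsi P' ->
     `|psik k P' - psik k P| <= delta k (dist P' P)).

Definition Lset {Theta : normedModType R} (psik : R -> Meas -> Theta)
  (delta : R -> R -> R) (G : set R) (t : R) (mu : Meas) : set R :=
  [set k | G k /\ forall k', G k' -> k <= k' ->
     `|psik k mu - psik k' mu| <= 4 * delta k' t].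

Definition ktilde {Theta : normedModType R} (psik : R -> Meas -> Theta)
  (delta : R -> R -> R) (G : set R) (t : R) (mu : Meas) : R :=
  inf (Lset psik delta G t mu).

End Defs.

(* Main.v *)
Require Import Defs.
From mathcomp Require Import all_boot all_order all_algebra.
From mathcomp Require Import all_classical all_reals all_analysis.
From mathcomp Require Import lra.
Import Order.TTheory GRing.Theory Num.Theory numFieldTopology.Exports numFieldNormedType.Exports.

Local Open Scope classical_set_scope.
Local Open Scope ring_scope.

Section H.
Variable R : realType.

Lemma seq_min (s : seq R) : s != [::] -> exists2 x, x \in s & forall y, y \in s -> x <= y.
Proof.
elim: s => // a s IH _.
case: (eqVneq s [::]) => [->|/IH [x xs hx]].
  by exists a => [|y]; rewrite ?inE // => /eqP ->.
case: (leP a x) => hax.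
  exists a; first by rewrite inE eqxx.
  move=> y; rewrite inE => /orP[/eqP->//|/hx]; exact: le_trans.
exists x; first by rewrite inE xs orbT.
move=> y; rewrite inE => /orP[/eqP->|/hx//]; exact: ltW.
Qed.

Lemma seq_max (s : seq R) : s != [::] -> exists2 x, x \in s & forall y, y \in s -> y <= x.
Proof.
elim: s => // a s IH _.
case: (eqVneq s [::]) => [->|/IH [x xs hx]].
  by exists a => [|y]; rewrite ?inE // => /eqP ->.
case: (leP x a) => hax.
  exists a; first by rewrite inE eqxx.
  move=> y; rewrite inE => /orP[/eqP->//|/hx] h; exact: le_trans h hax.
exists x; first by rewrite inE xs orbT.
move=> y; rewrite inE => /orP[/eqP->|/hx//]; exact: ltW.
Qed.

Lemma fin_min {A : set R} : finite_set A -> A !=set0 ->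
  exists2 x, A x & forall y, A y -> x <= y.
Proof.
move=> /finite_fsetP[X ->] [z zX].
have : finmap.enum_fset X != [::].
  by apply/eqP => h; move: zX; rewrite /= /in_mem /= /finmap.pred_of_finset h.
move=> /seq_min[x xs hx]; exists x => // y; exact: hx.
Qed.

Lemma fin_max {A : set R} : finite_set A -> A !=set0 ->
  exists2 x, A x & forall y, A y -> y <= x.
Proof.
move=> /finite_fsetP[X ->] [z zX].
have : finmap.enum_fset X != [::].
  by apply/eqP => h; move: zX; rewrite /= /in_mem /= /finmap.pred_of_finset h.
move=> /seq_max[x xs hx]; exists x => // y; exact: hx.
Qed.

Lemma inf_min {E : set R} {x} : E x -> (forall y, E y -> x <= y) -> inf E = x.
Proof.
move=> Ex hx; apply/eqP; rewrite eq_le; apply/andP; split.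
  by apply: ge_inf => //; exists x => y /hx.
by apply: lb_le_inf; [exists x | move=> y /hx].
Qed.

Lemma lepski (V : normedModType R) (G : set R) (f : R -> V) (t : V) (dl b : R -> R) :
  finite_set G -> G !=set0 ->
  (forall k, G k -> 0 <= dl k) -> (forall k, G k -> 0 <= b k) ->
  (forall k k', G k -> G k' -> k <= k' -> dl k <= dl k') ->
  (forall k k', G k -> G k' -> k <= k' -> b k' <= b k) ->
  (forall k, G k -> `|f k - t| <= dl k + b k) ->
  `|f (inf [set k | G k /\ forall k', G k' -> k <= k' -> `|f k - f k'| <= 4 * dl k']) - t|
   <= 5 * inf [set dl k + b k | k in G].
Proof.
move=> fG G0 dl0 b0 dlm bm hf.
set L := [set k | _ /\ _].
have [kM GkM hkM] := fin_max fG G0.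
have LkM : L kM.
  split=> // k' Gk' hk'; have -> : k' = kM by apply/eqP; rewrite eq_le hk' hkM.
  by rewrite subrr normr0 mulr_ge0 // dl0.
have fL : finite_set L by apply: (@sub_finite_set _ _ G) => // k [].
have [kt Lkt hkt] := fin_min fL (ex_intro _ _ LkM).
rewrite (inf_min Lkt hkt).
have fI : finite_set [set dl k + b k | k in G] by exact: finite_image.
have [v [ks Gks <-] hv] := fin_min fI (image_nonempty _ G0).
rewrite (inf_min (ex_intro2 _ _ ks Gks erefl) hv).
case: Lkt => Gkt hLkt.
have dks := dl0 _ Gks; have bks := b0 _ Gks.
case: (leP kt ks) => hk.
  apply: le_trans (ler_distD (f ks) _ _) _.
  have := hLkt _ Gks hk; have := hf _ Gks; lra.
pose S := [set k | G k /\ k < kt].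
have fS : finite_set S by apply: (@sub_finite_set _ _ G) => // k [].
have [kp [Gkp kpt] hkp] := fin_max fS (ex_intro _ ks (conj Gks hk)).
have nLkp : ~ L kp.
  by move=> /hkt; rewrite leNgt kpt.
have [k' [Gk' [hk' hlt]]] : exists k', G k' /\ kp <= k' /\ 4 * dl k' < `|f kp - f k'|.
  apply: contrapT => hn; apply: nLkp; split=> // k' Gk' hk'.
  rewrite leNgt; apply/negP => hlt; apply: hn; exists k'; split => //.
have kpk' : kp != k'.
  apply/negP => /eqP eq; move: hlt; rewrite eq subrr normr0 ltNge mulr_ge0 // dl0 //.
have ktk' : kt <= k'.
  rewrite leNgt; apply/negP => h'.
  have : k' <= kp by apply: hkp.
  by move=> h''; move: kpk'; rewrite eq_le hk' h''.
have kskp : ks <= kp by apply: hkp.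
have h1 : `|f kp - f k'| <= `|f kp - t| + `|f k' - t|.
  by rewrite (distrC (f k')); exact: ler_distD.
have := hf _ Gkp; have := hf _ Gk'; have := dlm _ _ Gkp Gk' hk'.
have := bm _ _ Gks Gkp kskp; have := bm _ _ Gkp Gk' hk'.
have := dlm _ _ Gkt Gk' ktk'; have := bm _ _ Gks Gkt (ltW hk).
have := hf _ Gkt.
lra.
Qed.
End H.
Section E.
Variables (R : realType) (d : nat).

Lemma borel_set1 (x : 'M[R]_(1, d)) : borel_Rd [set x].
Proof.
have c : closed [set x].
  apply: accessible_closed_set1; apply: hausdorff_accessible; exact: norm_hausdorff.
have -> : [set x] = setT `\` ~` [set x] by rewrite setDE setTI setCK.
apply: sigma_algebraCD; apply: sub_sigma_algebra; exact: closed_openC.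
Qed.

Lemma borel_bigcup (F : nat -> set 'M[R]_(1, d)) : (forall i, borel_Rd (F i)) -> borel_Rd (\bigcup_i F i).
Proof. exact: sigma_algebra_bigcup. Qed.

Lemma borel_setT : borel_Rd (@setT 'M[R]_(1, d)).
Proof. apply: sub_sigma_algebra; exact: openT. Qed.

Lemma Zmeas_bigcup (Z : set 'M[R]_(1, d)) (F : nat -> set 'M[R]_(1, d)) :
  (forall i, Zmeasurable Z (F i)) -> Zmeasurable Z (\bigcup_i F i).
Proof.
move=> hF; have [B hB] := choice hF.
exists (\bigcup_i B i); split; first by apply: borel_bigcup => i; case: (hB i).
by rewrite setI_bigcupl; apply: eq_bigcupr => i _; case: (hB i).
Qed.

Lemma Zmeas_Z (Z : set 'M[R]_(1, d)) : Zmeasurable Z Z.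
Proof. by exists setT; split; [exact: borel_setT | rewrite setTI]. Qed.

Lemma fin_borel (x : nat -> 'M[R]_(1, d)) n : borel_Rd [set x i | i in `I_n].
Proof.
have -> : [set x i | i in `I_n] = \bigcup_i (if (i < n)%N then [set x i] else set0).
  apply/seteqP; split=> [y [i hi <-]|y [i _]].
    by exists i => //; move: hi => /= ->.
  by case: ifP => // hi ->; exists i.
apply: borel_bigcup => i; case: ifP => _; first exact: borel_set1.
exact: sigma_algebra0.
Qed.

Lemma sum_indic1 T (F : nat -> set T) x N j0 : trivIset setT F -> F j0 x -> (j0 < N)%N ->
  \sum_(j < N) \1_(F j) x = 1 :> R.
Proof.
move=> tF Fx hj.
rewrite (bigD1 (Ordinal hj)) //= indicE mem_set // big1 ?addr0 // => j hj'.
rewrite indicE memNset // => Fjx.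
have hne : (j : nat) != j0 by apply: contra hj' => /eqP h; apply/eqP/val_inj.
move/trivIsetP : tF => /(_ j j0 I I hne) h0.
have : (F j `&` F j0) x by [].
by rewrite h0.

Qed.

Lemma sum_indic0 T (F : nat -> set T) x N : (forall j, (j < N)%N -> ~ F j x) ->
  \sum_(j < N) \1_(F j) x = 0 :> R.
Proof. by move=> h; rewrite big1 // => j _; rewrite indicE memNset //; apply: h. Qed.

Lemma sum_indic_le1 T (F : nat -> set T) x N : trivIset setT F ->
  \sum_(j < N) \1_(F j) x <= 1 :> R.
Proof.
move=> tF; case: (pselect (exists j, (j < N)%N /\ F j x)) => [[j [hj Fx]]|hn].
  by rewrite (@sum_indic1 _ _ _ _ _ tF Fx hj).
by rewrite sum_indic0 // => j hj Fx; apply: hn; exists j.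
Qed.

Lemma sum_indic_ev T (F : nat -> set T) x : trivIset setT F ->
  exists N0, forall N, (N0 <= N)%N -> \sum_(j < N) \1_(F j) x = \1_(\bigcup_j F j) x :> R.
Proof.
move=> tF; case: (pselect ((\bigcup_j F j) x)) => [[j _ Fx]|hn].
  exists j.+1 => N hN; by rewrite (@sum_indic1 _ _ _ _ _ tF Fx hN) indicE mem_set //; exists j.
exists 0%N => N _; rewrite sum_indic0; last by move=> j _ Fx; apply: hn; exists j.
by rewrite indicE memNset.
Qed.

Lemma empirical_discrete {T : Type} (Z : set 'M[R]_(1, d)) (X : nat -> T -> 'M[R]_(1, d)) n w :
  (0 < n)%N -> (forall i, Z (X i w)) -> is_discrete_prob Z (empirical Z X n w).
Proof.
move=> n0 XZ.
have mE A : Zmeasurable Z A -> empirical Z X n w A = n%:R^-1 * \sum_(i < n) \1_A (X i w).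
  by move=> hA; rewrite /empirical; case: pselect.
have nR : n%:R != 0 :> R by rewrite pnatr_eq0 -lt0n.
have ZZ := Zmeas_Z Z.
have sum1 A : (forall i, A (X i w)) -> \sum_(i < n) \1_A (X i w) = n%:R :> R.
  move=> hA; rewrite (eq_bigr (fun _ => 1)) ?sumr_const ?card_ord // => i _.
  by rewrite indicE mem_set.
have isca : is_ca Z (empirical Z X n w).
  split; first by move=> A hA; rewrite /empirical; case: pselect.
  split.
    move=> F hF tF; apply: cvg_near_cst.
    have [g hg] := choice (fun i : 'I_n => @sum_indic_ev _ F (X i w) tF).
    exists (\max_(i < n) g i)%N => // N /= hN.
    rewrite /series /= big_mkord (mE _ (Zmeas_bigcup _ _ hF)).
    under eq_bigr do rewrite (mE _ (hF _)).
    rewrite -mulr_sumr exchange_big /=; congr (_ * _); apply: eq_bigr => i _.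
    apply: hg; apply: leq_trans hN; exact: leq_bigmax.
  exists 1 => F hF tF N.
  under eq_bigr do rewrite (mE _ (hF _)).
  under eq_bigr do rewrite normrM ger0_norm ?invr_ge0 ?ler0n // ger0_norm ?sumr_ge0 // => *; rewrite ?indicE ?ler0n //.
  rewrite -mulr_sumr exchange_big /= ler_pdivrMl ?ltr0n // mulr1.
  rewrite -(sum1 setT) //; apply: ler_sum => i _.
  rewrite indicE mem_set //; exact: sum_indic_le1.
have isp : is_prob Z (empirical Z X n w).
  split=> //; split.
    move=> A hA; rewrite mE // mulr_ge0 ?invr_ge0 ?ler0n //.
    by apply: sumr_ge0 => i _; rewrite indicE ler0n.
  by rewrite mE // sum1 // mulVf.
split=> //; exists [set X i w | i in `I_n]; split.
  by apply: finite_set_countable; apply: finite_image; exact: finite_II.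
split; first by move=> _ [i _ <-].
have hS : Zmeasurable Z [set X i w | i in `I_n].
  exists [set X i w | i in `I_n]; split; first exact: fin_borel.
  by apply/esym/setIidl => _ [i _ <-].
rewrite mE // (eq_bigr (fun _ => 1)) ?sumr_const ?card_ord ?mulVf // => i _.
by rewrite indicE mem_set //; exists i => /=.
Qed.
End E.
Theorem corollary1 (R : realType) (d : nat) (Z : set 'M[R]_(1, d))
  (Theta : normedModType R) (K : set R) (M : set (@Meas R d))
  (psi : @Meas R d -> Theta) (psik : R -> @Meas R d -> Theta)
  (Dpsi : set (@Meas R d)) (dist : @Meas R d -> @Meas R d -> R)
  (delta : R -> R -> R) (P : @Meas R d) (r : nat -> R) (G : nat -> set R)
  (dO : measure_display) (Om : measurableType dO) (Pr : probability Om R)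
  (X : nat -> Om -> 'M[R]_(1, d)) :
  (* K is a subset of R_+ unbounded above *)
  K `<=` [set k | 0 <= k] ->
  (forall x : R, exists k, K k /\ x < k) ->
  (* M is a set of Borel probability measures on Z *)
  M `<=` is_prob Z ->
  regularization Z K M psi psik Dpsi ->
  is_distance Dpsi dist ->
  M P ->
  reg_continuous_at K psik Dpsi dist P delta ->
  (* the data are IID with law P *)
  iid_law Pr Z X P ->
  (* (r_n) positive and diverging, d(P_n, P) = o_P(r_n^-1) *)
  (forall n, 0 < r n) ->
  r n @[n --> \oo] --> +oo ->
  little_o_in_prob Pr (fun n w => dist (empirical Z X n w) P) (fun n => (r n)^-1) ->
  (* monotonicity / continuity assumptions *)
  {within K, continuous (fun k => `|psik k P - psi P|)} ->
  (forall k k', K k -> K k' -> k <= k' ->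
     `|psik k' P - psi P| <= `|psik k P - psi P|) ->
  (forall n, {within K, continuous (fun k => delta k (r n)^-1)}) ->
  (forall n k k', K k -> K k' -> k <= k' ->
     delta k (r n)^-1 <= delta k' (r n)^-1) ->
  (* the grids G_n: finite (nonempty) subsets of K *)
  (forall n, finite_set (G n) /\ G n `<=` K /\ G n !=set0) ->
  big_O_in_prob Pr
    (fun n w => `|psik (ktilde psik delta (G n) (r n)^-1 (empirical Z X n w))
                       (empirical Z X n w) - psi P|)
    (fun n => inf [set delta k (r n)^-1 + `|psik k P - psi P| | k in G n]).
Proof.
move=> Kpos Kunb MP reg dis MP0 cont iid rpos rinf lo bcont bmon dcont dmon hG.
case: reg => [DZ [MD [DD _]]].
case: cont => [modd cbound].
case: iid => [XZ _].
move=> eta eta0; exists 5.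
have [N _ hN] := lo 1 eta ltr01 eta0.
exists N.+1 => // n /= hn.
have [B [mB [sB pB]]] := hN n (leq_trans (leqnSn N) hn).
exists B; split => //; split => //; apply: subset_trans sB.
move=> w /= h; rewrite ltNge; apply/negP => hd; move: h; apply/negP; rewrite -leNgt.
have n0 : (0 < n)%N by apply: leq_trans hn.
have Dn : Dpsi (empirical Z X n w) := DD _ (@empirical_discrete R d _ Z X n w n0 (fun i => XZ i w)).
have DP : Dpsi P := MD _ MP0.
have [d0 _] := dis _ _ _ Dn DP DP.
have tpos : 0 < (r n)^-1 by rewrite invr_gt0.
have [fG [GK G0]] := hG n.
rewrite /ktilde /Lset normr_id.
have h1 : forall k, G n k -> 0 <= delta k (r n)^-1.
  by move=> k Gk; case: (modd k (GK _ Gk)) => _ [_ [h _]]; apply: h; exact: ltW.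
have h2 : forall k, G n k -> 0 <= `|psik k P - psi P| by move=> *; exact: normr_ge0.
have h3 : forall k k', G n k -> G n k' -> k <= k' -> delta k (r n)^-1 <= delta k' (r n)^-1.
  by move=> k k' Gk Gk' hk; apply: dmon => //; apply: GK.
have h4 : forall k k', G n k -> G n k' -> k <= k' -> `|psik k' P - psi P| <= `|psik k P - psi P|.
  by move=> k k' Gk Gk' hk; apply: bmon => //; apply: GK.
have h5 : forall k, G n k -> `|psik k (empirical Z X n w) - psi P| <= delta k (r n)^-1 + `|psik k P - psi P|.
  move=> k Gk.
  apply: le_trans (ler_distD (psik k P) _ _) _; apply: lerD => //.
  apply: le_trans (cbound k _ (GK _ Gk) Dn) _.
  case: (modd k (GK _ Gk)) => _ [h _]; apply: h => //.
  apply: le_trans (ler_norm _) _; rewrite mul1r in hd; exact: hd.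
exact: (@lepski R _ (G n) (fun k => psik k (empirical Z X n w)) (psi P)
   (fun k => delta k (r n)^-1) (fun k => `|psik k P - psi P|) fG G0 h1 h2 h3 h4 h5).
Qed.
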